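(* Let $k$ be a unital commutative ring, $n$ a positive integer, and let $\varepsilon\in k$ be invertible. Then there is an isomorphism of graded $k$-modules \[\operatorname{Ext}^{\star}_{\mathcal{R}_n(\varepsilon)}(\mathbf{1},\mathbf{1})\cong H^\star(\Sigma_n,\mathbf{1}).\]
   Context: A rook $n$-diagram is a graph on vertices $1,\dots,n$ (left column, top to bottom) and $\bar1,\dots,\bar n$ (right column) each of whose connected components is either an isolated vertex or a single edge joining a left vertex to a right vertex (a propagating edge). The rook algebra $\mathcal{R}_n(\varepsilon)$ is the free $k$-module on rook $n$-diagrams with product: identify the right column of $d_1$ with the left column of $d_2$ (middle column); let $\beta$ be the number of connected components lying entirely in the middle column (isolated middle vertices); let $d_3$ join two outer vertices iff they are joined by a path; $d_1d_2=\varepsilon^\beta d_3$. The identity has edges $\{i,\bar i\}$. The augmentation $\tau$ sends diagrams with $n$ propagating edges to $1$ and all others to $0$; $\mathbf{1}$ is $k$ with the algebra acting via $\tau$. $H^\star(\Sigma_n,\mathbf{1})$ is group cohomology with trivial coefficients $k$. *)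

(* Defs.v *)
From HB Require Import structures.
From mathcomp Require Import all_boot all_order all_algebra all_fingroup.
Set Implicit Arguments. Unset Strict Implicit. Unset Printing Implicit Defensive.
Import GRing.Theory.
Local Open Scope ring_scope.

(* Bar-complex cohomology of an augmented k-algebra A that is free     *)
(* over k with a basis D closed under multiplication up to a scalar:   *)
(* mul a b = (c, d) means a * b = c * d in A; aug : D -> k is the      *)
(* augmentation on basis elements (k is the module 1 via aug).         *)
(* Since A and k are k-free, Ext^q_A(1,1) is the q-th cohomology of    *)
(* Hom_A(Bar(A) (x)_A 1, 1) = Hom_k(A^{(x)q}, k) = functions D^q -> k, *)
(* with the bar differential                                           *)
(*  (df)(a1..a_{q+1}) = aug a1 f(a2..) + sum_i (-1)^i f(..a_i a_{i+1}..)*)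
(*                      + (-1)^{q+1} f(a1..a_q) aug a_{q+1}.            *)
(* A degree-q cochain is a function seq D -> k, only its values on     *)
(* sequences of size q matter.                                         *)

Section Bar.
Variables (k : comPzRingType) (D : Type) (mul : D -> D -> k * D) (aug : D -> k).

Definition bar_merge (f : seq D -> k) (s : seq D) (i : nat) : k :=
  match drop i s with
  | a :: b :: r => (mul a b).1 * f (take i s ++ (mul a b).2 :: r)
  | _ => 0
  end.

Definition bar_delta (q : nat) (f : seq D -> k) (s : seq D) : k :=
  (match s with x :: t => aug x * f t | [::] => 0 end)
  + \sum_(i < q) (-1) ^+ i.+1 * bar_merge f s i
  + (match s with x :: t => (-1) ^+ q.+1 * f (take q s) * aug (last x t)
                | [::] => 0 end).

Definition is_cocycle (q : nat) (f : seq D -> k) : Prop :=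
  forall s, size s = q.+1 -> bar_delta q f s = 0.

Definition is_coboundary (q : nat) (f : seq D -> k) : Prop :=
  match q with
  | 0 => forall s, size s = 0 -> f s = 0
  | p.+1 => exists y : seq D -> k,
      forall s, size s = p.+1 -> bar_delta p y s = f s
  end.

End Bar.

(* phi : C1 -> C2 induces a well-defined k-linear map H^q_1 -> H^q_2 *)
Definition induces_hom (k : comPzRingType) (D1 D2 : Type)
  (mul1 : D1 -> D1 -> k * D1) (aug1 : D1 -> k)
  (mul2 : D2 -> D2 -> k * D2) (aug2 : D2 -> k) (q : nat)
  (phi : (seq D1 -> k) -> (seq D2 -> k)) : Prop :=
  [/\ forall z, is_cocycle mul1 aug1 q z -> is_cocycle mul2 aug2 q (phi z),
      forall z, is_coboundary mul1 aug1 q z -> is_coboundary mul2 aug2 q (phi z)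
    & forall (c : k) z z', is_cocycle mul1 aug1 q z -> is_cocycle mul1 aug1 q z' ->
        is_coboundary mul2 aug2 q
          (fun s => phi (fun t => c * z t + z' t) s - (c * phi z s + phi z' s))].

(* H^q_1 and H^q_2 are isomorphic k-modules (every isomorphism of the  *)
(* quotient modules lifts, by choice, to such a pair phi, psi).        *)
Definition bar_H_iso (k : comPzRingType) (D1 D2 : Type)
  (mul1 : D1 -> D1 -> k * D1) (aug1 : D1 -> k)
  (mul2 : D2 -> D2 -> k * D2) (aug2 : D2 -> k) (q : nat) : Prop :=
  exists (phi : (seq D1 -> k) -> (seq D2 -> k)) (psi : (seq D2 -> k) -> (seq D1 -> k)),
  [/\ induces_hom mul1 aug1 mul2 aug2 q phi,
      induces_hom mul2 aug2 mul1 aug1 q psi,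
      forall z, is_cocycle mul1 aug1 q z ->
        is_coboundary mul1 aug1 q (fun s => psi (phi z) s - z s)
    & forall z, is_cocycle mul2 aug2 q z ->
        is_coboundary mul2 aug2 q (fun s => phi (psi z) s - z s)].

Definition graded_H_iso (k : comPzRingType) (D1 D2 : Type)
  (mul1 : D1 -> D1 -> k * D1) (aug1 : D1 -> k)
  (mul2 : D2 -> D2 -> k * D2) (aug2 : D2 -> k) : Prop :=
  forall q : nat, bar_H_iso mul1 aug1 mul2 aug2 q.

(* Rook n-diagrams: partial injections from the left column 'I_n to   *)
(* the right column 'I_n (f i = Some j : propagating edge {i, bar j}). *)

Definition rook_inj n (f : {ffun 'I_n -> option 'I_n}) : Prop :=
  forall i j x, f i = Some x -> f j = Some x -> i = j.

Definition rook n := {f : {ffun 'I_n -> option 'I_n} | rook_inj f}.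

Definition rook_comp_fun n (d1 d2 : rook n) : {ffun 'I_n -> option 'I_n} :=
  [ffun i => obind (sval d2) (sval d1 i)].

Lemma rook_comp_inj n (d1 d2 : rook n) : rook_inj (rook_comp_fun d1 d2).
Proof.
case: d1 d2 => [f1 h1] [f2 h2] i j x; rewrite /rook_comp_fun !ffunE /=.
case E1: (f1 i) => [a|] //= Ha; case E2: (f1 j) => [b|] //= Hb.
have ab : a = b by apply: (h2 _ _ x).
by subst b; apply: (h1 _ _ a).
Qed.

Definition rook_comp n (d1 d2 : rook n) : rook n :=
  exist _ (rook_comp_fun d1 d2) (@rook_comp_inj n d1 d2).

(* number of connected components lying entirely in the middle column:
   middle vertices j hit by no edge of d1 and with no edge in d2 *)
Definition rook_beta n (d1 d2 : rook n) : nat :=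
  #|[pred j : 'I_n | [forall i, sval d1 i != Some j] && (sval d2 j == None)]|.

(* product in R_n(eps) on basis diagrams: d1 d2 = eps^beta d3 *)
Definition rook_mul (k : comPzRingType) n (eps : k) (d1 d2 : rook n) : k * rook n :=
  (eps ^+ rook_beta d1 d2, rook_comp d1 d2).

Definition rook_aug (k : comPzRingType) n (d : rook n) : k :=
  if [forall i, sval d i != None] then 1 else 0.

(* group algebra k[Sigma_n], trivial module: H^*(Sigma_n, 1) is the   *)
(* cohomology of the standard (inhomogeneous) cochain complex, which  *)
(* is the bar complex above for basis Sigma_n and augmentation 1.     *)
Definition sym_mul (k : comPzRingType) n (g h : {perm 'I_n}) : k * {perm 'I_n} :=
  (1, (g * h)%g).

Definition sym_aug (k : comPzRingType) n (g : {perm 'I_n}) : k := 1.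

(* Main.v *)
Require Import Defs.
From mathcomp Require Import all_boot all_order all_algebra all_fingroup.
From mathcomp Require Import ring zify.
From Stdlib Require Import FunctionalExtensionality ProofIrrelevance.
Set Implicit Arguments. Unset Strict Implicit. Unset Printing Implicit Defensive.
Import GRing.Theory.
Local Open Scope ring_scope.

Section Gen.
Variables (k : comPzRingType) (D : Type) (mul : D -> D -> k * D) (aug : D -> k).

Definition act (x : seq (k * D)) (F : D -> k) : k := \sum_(p <- x) p.1 * F p.2.

Lemma act_nil F : act [::] F = 0. Proof. by rewrite /act big_nil. Qed.
Lemma act_cons p x F : act (p :: x) F = p.1 * F p.2 + act x F.
Proof. by rewrite /act big_cons. Qed.

Lemma act_lin x (c : k) F G : act x (fun d => c * F d + G d) = c * act x F + act x G.
Proof.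
elim: x => [|p x IH]; first by rewrite !act_nil; ring.
by rewrite !act_cons IH; ring.
Qed.

Lemma act0 x : act x (fun _ => 0) = 0.
Proof. elim: x => [|p x IH]; rewrite ?act_nil // act_cons IH; ring. Qed.

Lemma actD x F G : act x (fun d => F d + G d) = act x F + act x G.
Proof. elim: x => [|p x IH]; rewrite ?act_nil ?act_cons ?IH; ring. Qed.

Lemma actZ x c F : act x (fun d => c * F d) = c * act x F.
Proof. elim: x => [|p x IH]; rewrite ?act_nil ?act_cons ?IH; ring. Qed.

Lemma actN x F : act x (fun d => - F d) = - act x F.
Proof. elim: x => [|p x IH]; rewrite ?act_nil ?act_cons ?IH; ring. Qed.

Lemma actB x F G : act x (fun d => F d - G d) = act x F - act x G.
Proof. by rewrite actD actN. Qed.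

Lemma act_ext x F G : (forall d, F d = G d) -> act x F = act x G.
Proof. by move=> h; congr act; apply: functional_extensionality. Qed.

Lemma act_exch x y (G : D -> D -> k) :
  act x (fun d => act y (fun e => G d e)) = act y (fun e => act x (fun d => G d e)).
Proof.
elim: x => [|p x IH].
  by rewrite act_nil -(act0 y); apply: act_ext => e; rewrite act_nil.
rewrite act_cons IH -actZ -actD; apply: act_ext => e; by rewrite act_cons.
Qed.

Definition sgl (d : D) : seq (k * D) := [:: (1, d)].
Lemma act_sgl d F : act (sgl d) F = F d.
Proof. by rewrite act_cons act_nil mul1r addr0. Qed.

Definition emul (x y : seq (k * D)) : seq (k * D) :=
  [seq (p.1 * q.1 * (mul p.2 q.2).1, (mul p.2 q.2).2) | p <- x, q <- y].

Lemma act_emul x y F :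
  act (emul x y) F = act x (fun d => act y (fun e => (mul d e).1 * F (mul d e).2)).
Proof.
elim: x => [|p x IH]; first by rewrite /emul /= !act_nil.
rewrite act_cons -IH /emul /= /act big_cat /= big_map; congr (_ + _).
rewrite mulr_sumr; apply: eq_bigr => q _ /=; ring.
Qed.

Definition negl (x : seq (k * D)) := [seq (- p.1, p.2) | p <- x].
Lemma act_negl x F : act (negl x) F = - act x F.
Proof.
elim: x => [|p x IH]; first by rewrite act_nil oppr0.
rewrite /negl /= act_cons -/(negl x) IH act_cons /=; ring.
Qed.

Definition lin (x : seq (k * D)) (g : seq D -> k) : seq D -> k :=
  fun t => act x (fun d => g (d :: t)).

Lemma merge_lin c f1 f2 s i :
  bar_merge mul (fun t => c * f1 t + f2 t) s i = c * bar_merge mul f1 s i + bar_merge mul f2 s i.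
Proof. rewrite /bar_merge; case: (drop i s) => [|a [|b r]] /=; ring. Qed.

Lemma delta_lin p c f1 f2 s :
  bar_delta mul aug p (fun t => c * f1 t + f2 t) s = c * bar_delta mul aug p f1 s + bar_delta mul aug p f2 s.
Proof.
rewrite /bar_delta.
have -> : \sum_(i < p) (-1) ^+ i.+1 * bar_merge mul (fun t => c * f1 t + f2 t) s i =
   c * \sum_(i < p) (-1) ^+ i.+1 * bar_merge mul f1 s i + \sum_(i < p) (-1) ^+ i.+1 * bar_merge mul f2 s i.
  rewrite mulr_sumr -big_split; apply: eq_bigr => i _ /=; rewrite merge_lin; ring.
case: s => [|x t] /=; ring.
Qed.

Lemma delta0 p s : bar_delta mul aug p (fun _ => 0) s = 0.
Proof.
rewrite /bar_delta big1 => [|i _]; last by rewrite /bar_merge; case: (drop i s) => [|a [|b r]] /=; ring.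
case: s => [|x t] /=; ring.
Qed.

Lemma delta_ext p f1 f2 s : (forall t, f1 t = f2 t) -> bar_delta mul aug p f1 s = bar_delta mul aug p f2 s.
Proof. by move=> h; congr bar_delta; apply: functional_extensionality. Qed.

Lemma deltaD p f1 f2 s :
  bar_delta mul aug p (fun t => f1 t + f2 t) s = bar_delta mul aug p f1 s + bar_delta mul aug p f2 s.
Proof. rewrite -[bar_delta _ _ _ f1 s]mul1r -delta_lin; apply: delta_ext => t; ring. Qed.

Lemma deltaZ p c f s : bar_delta mul aug p (fun t => c * f t) s = c * bar_delta mul aug p f s.
Proof. rewrite -[c * _]addr0 -(delta0 p s) -delta_lin; apply: delta_ext => t; ring. Qed.

Lemma deltaN p f s : bar_delta mul aug p (fun t => - f t) s = - bar_delta mul aug p f s.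
Proof. rewrite -mulN1r -deltaZ; apply: delta_ext => t; ring. Qed.

Lemma deltaB p f1 f2 s :
  bar_delta mul aug p (fun t => f1 t - f2 t) s = bar_delta mul aug p f1 s - bar_delta mul aug p f2 s.
Proof. by rewrite deltaD deltaN. Qed.

Lemma delta_act p x (G : D -> seq D -> k) s :
  bar_delta mul aug p (fun t => act x (fun d => G d t)) s = act x (fun d => bar_delta mul aug p (G d) s).
Proof.
elim: x => [|q x IH]; first by rewrite act_nil -(delta0 p s); apply: delta_ext => t; rewrite act_nil.
rewrite act_cons -IH -delta_lin; apply: delta_ext => t; by rewrite act_cons.
Qed.

Lemma D0 g a : bar_delta mul aug 0 g [:: a] = 0.
Proof. rewrite /bar_delta big_ord0 /=; ring. Qed.

Lemma D1 p g a b s :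
  bar_delta mul aug p.+1 g (a :: b :: s) =
  aug a * g (b :: s) - (mul a b).1 * g ((mul a b).2 :: s) + aug b * g (a :: s)
  - bar_delta mul aug p (fun t => g (a :: t)) (b :: s).
Proof.
rewrite /bar_delta big_ord_recl /=.
have -> : \sum_(i < p) (-1) ^+ (bump 0 i).+1 * bar_merge mul g [:: a, b & s] (bump 0 i) =
   - \sum_(i < p) (-1) ^+ i.+1 * bar_merge mul (fun t => g (a :: t)) (b :: s) i.
  by rewrite -sumrN; apply: eq_bigr => i _; rewrite /bump /= add1n exprS mulN1r mulNr.
move: (\sum_(i < p) _) => S.
rewrite /bar_merge /= !exprS; ring.
Qed.


Lemma actZr x c F : act x (fun d => F d * c) = act x F * c.
Proof. by rewrite mulrC -actZ; apply: act_ext => d; rewrite mulrC. Qed.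

Lemma emul_congr_r x y y' F : (forall G, act y G = act y' G) ->
  act (emul x y) F = act (emul x y') F.
Proof. by move=> h; rewrite !act_emul; apply: act_ext => d. Qed.

Lemma emul_congr_l x x' y F : (forall G, act x G = act x' G) ->
  act (emul x y) F = act (emul x' y) F.
Proof. by move=> h; rewrite !act_emul. Qed.

Lemma lin_ext x f1 f2 t : (forall d, f1 (d :: t) = f2 (d :: t)) -> lin x f1 t = lin x f2 t.
Proof. by move=> h; apply: act_ext. Qed.

Lemma delta_lin_act p x g b s :
  bar_delta mul aug p (lin x g) (b :: s) =
  act x aug * g (b :: s) - act x (fun e => (mul e b).1 * g ((mul e b).2 :: s))
  + aug b * lin x g s - lin x (bar_delta mul aug p.+1 g) (b :: s).
Proof.
elim: x => [|q x IH].
  transitivity (bar_delta mul aug p (fun _ => 0) (b :: s)).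
    by apply: delta_ext => t; rewrite /lin act_nil.
  rewrite delta0 /lin !act_nil; ring.
have -> : lin (q :: x) g = fun t => q.1 * g (q.2 :: t) + lin x g t.
  by apply: functional_extensionality => t; rewrite /lin act_cons.
rewrite delta_lin IH /lin !act_cons D1 /=; ring.
Qed.

Variables (one : D) (z : seq (k * D)).
Hypothesis hmul1l : forall d, mul one d = (1, d).
Hypothesis hmul1r : forall d, mul d one = (1, d).
Hypothesis hassoc1 : forall a b c,
  (mul a b).1 * (mul (mul a b).2 c).1 = (mul b c).1 * (mul a (mul b c).2).1.
Hypothesis hassoc2 : forall a b c, (mul (mul a b).2 c).2 = (mul a (mul b c).2).2.
Hypothesis haug1 : aug one = 1.
Hypothesis zcent : forall d F, act (emul (sgl d) z) F = act (emul z (sgl d)) F.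
Hypothesis zidem : forall F, act (emul z z) F = act z F.
Hypothesis zaug : forall d, act (emul z (sgl d)) aug = aug d.

Lemma emul_assoc x y u F : act (emul (emul x y) u) F = act (emul x (emul y u)) F.
Proof.
rewrite !act_emul; apply: act_ext => a.
rewrite !act_emul; apply: act_ext => b.
rewrite -actZ; apply: act_ext => c.
rewrite hassoc2 mulrA hassoc1; ring.
Qed.

Lemma zcentral y F : act (emul y z) F = act (emul z y) F.
Proof.
rewrite act_emul act_emul [in RHS]act_exch; apply: act_ext => d.
have h := zcent d F; rewrite act_emul act_sgl act_emul in h.
rewrite h; apply: act_ext => e; by rewrite act_sgl.
Qed.

Definition zb b := emul z (sgl b).
Definition w := (1, one) :: negl z.

Lemma act_w F : act w F = F one - act z F.
Proof. by rewrite /w act_cons act_negl mul1r. Qed.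

Lemma act_zb b F : act (zb b) F = act z (fun d => (mul d b).1 * F (mul d b).2).
Proof. by rewrite /zb act_emul; apply: act_ext => d; rewrite act_sgl. Qed.

Lemma act_z_one F : act (zb one) F = act z F.
Proof. by rewrite act_zb; apply: act_ext => d; rewrite hmul1r mul1r. Qed.

Lemma act_w_aug : act w aug = 0.
Proof. by rewrite act_w haug1 -act_z_one zaug haug1 subrr. Qed.

Lemma act_zb_aug a : act (zb a) aug = aug a.
Proof. exact: zaug. Qed.

Lemma F5 a F : act w (fun e => (mul e a).1 * F (mul e a).2) = F a - act (zb a) F.
Proof. by rewrite act_w hmul1l mul1r act_zb. Qed.

Lemma emul_x_w x F : act (emul x w) F = act x F - act (emul x z) F.
Proof.
rewrite !act_emul -actB; apply: act_ext => d.
by rewrite act_w hmul1r mul1r.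
Qed.

Lemma zaz a F : act (emul (zb a) z) F = act (zb a) F.
Proof.
rewrite /zb emul_assoc.
rewrite (@emul_congr_r z (emul (sgl a) z) (emul z (sgl a))); last by move=> G; exact: zcent.
by rewrite -emul_assoc (@emul_congr_l (emul z z) z); last by move=> G; exact: zidem.
Qed.

Lemma F3 a F : act w (fun d => act (zb a) (fun e => (mul e d).1 * F (mul e d).2)) = 0.
Proof.
rewrite -act_exch.
have := emul_x_w (zb a) F; rewrite zaz subrr act_emul => <-.
done.
Qed.

Lemma F4 a b F :
  act (zb b) (fun d => act (zb a) (fun e => (mul e d).1 * F (mul e d).2)) =
  (mul a b).1 * act (zb (mul a b).2) F.
Proof.
rewrite -act_exch.
have -> : act (zb a) (fun e => act (zb b) (fun d => (mul e d).1 * F (mul e d).2)) =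
          act (emul (zb a) (zb b)) F by rewrite act_emul.
rewrite /zb emul_assoc.
rewrite (@emul_congr_r z (emul (sgl a) (emul z (sgl b))) (emul z (emul (sgl a) (sgl b)))); last first.
  move=> G; rewrite -emul_assoc (@emul_congr_l (emul (sgl a) z) (emul z (sgl a))); last by move=> H; exact: zcent.
  by rewrite emul_assoc.
rewrite -emul_assoc (@emul_congr_l (emul z z) z); last by move=> G; exact: zidem.
rewrite act_emul act_zb -actZ; apply: act_ext => d.
by rewrite act_emul act_sgl act_sgl.
Qed.

Fixpoint Hc (g : seq D -> k) (s : seq D) {struct s} : k :=
  match s with
  | [::] => - lin w g [::]
  | b :: s' => - lin w g (b :: s') - Hc (lin (zb b) g) s'
  end.

Fixpoint Phi (g : seq D -> k) (s : seq D) {struct s} : k :=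
  match s with
  | [::] => g [::]
  | b :: s' => Phi (lin (zb b) g) s'
  end.

Lemma Hc_ext s f1 f2 : (forall v, size v = (size s).+1 -> f1 v = f2 v) -> Hc f1 s = Hc f2 s.
Proof.
elim: s f1 f2 => [|b s IH] f1 f2 h /=.
  by congr (- _); apply: lin_ext => d; apply: h.
congr (- _ - _); first by apply: lin_ext => d; apply: h.
apply: IH => v hv; apply: lin_ext => d; apply: h => /=; by rewrite hv.
Qed.

Lemma lin_lin x c f1 f2 : lin x (fun t => c * f1 t + f2 t) = fun t => c * lin x f1 t + lin x f2 t.
Proof. apply: functional_extensionality => t; exact: act_lin. Qed.

Lemma lin0 x : lin x (fun _ => 0) = fun _ => 0.
Proof. apply: functional_extensionality => t; exact: act0. Qed.

Lemma Hc_lin s c f1 f2 : Hc (fun t => c * f1 t + f2 t) s = c * Hc f1 s + Hc f2 s.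
Proof.
elim: s f1 f2 => [|b s IH] f1 f2 /=.
  rewrite /lin act_lin; ring.
rewrite (lin_lin (zb b)) IH /lin /= act_lin; ring.
Qed.

Lemma Hc0 s : Hc (fun _ => 0) s = 0.
Proof.
elim: s => [|b s IH] /=; first by rewrite /lin act0 oppr0.
by rewrite (lin0 (zb b)) IH /lin act0; ring.
Qed.

Lemma Hc_fext s f1 f2 : (forall t, f1 t = f2 t) -> Hc f1 s = Hc f2 s.
Proof. by move=> h; apply: Hc_ext => v _. Qed.

Lemma HcD s f1 f2 : Hc (fun t => f1 t + f2 t) s = Hc f1 s + Hc f2 s.
Proof. rewrite -[Hc f1 s]mul1r -Hc_lin; apply: Hc_fext => t; ring. Qed.

Lemma HcZ s c f : Hc (fun t => c * f t) s = c * Hc f s.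
Proof. rewrite -[c * _]addr0 -(Hc0 s) -Hc_lin; apply: Hc_fext => t; ring. Qed.

Lemma HcN s f : Hc (fun t => - f t) s = - Hc f s.
Proof. rewrite -mulN1r -HcZ; apply: Hc_fext => t; ring. Qed.

Lemma HcB s f1 f2 : Hc (fun t => f1 t - f2 t) s = Hc f1 s - Hc f2 s.
Proof. by rewrite HcD HcN. Qed.

Lemma delta1_lin x g c :
  lin x (bar_delta mul aug 1 g) [:: c] =
  act x aug * g [:: c] - act x (fun e => (mul e c).1 * g [:: (mul e c).2]) + aug c * lin x g [::].
Proof.
have := delta_lin_act 0 x g c [::]; rewrite D0 => /eqP; rewrite eq_sym subr_eq0 => /eqP ->.
done.
Qed.

Theorem Hc_homotopy p s g : size s = p.+1 ->
  bar_delta mul aug p (Hc g) s + Hc (bar_delta mul aug p.+1 g) s = g s - Phi g s.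
Proof.
elim: s p g => [|a s' IH] p g //.
case: s' IH => [|b s''] IH hs.
  have -> : p = 0%N by case: p hs.
  rewrite D0 add0r /= delta1_lin act_w_aug mul0r sub0r (F5 a (fun d => g [:: d])).
  have -> : lin w (lin (zb a) (bar_delta mul aug 1 g)) [::] = aug a * lin w g [::].
    rewrite {1}/lin.
    rewrite (@act_ext w _ (fun d => aug a * g [:: d] - act (zb a) (fun e => (mul e d).1 * g [:: (mul e d).2]) + aug d * lin (zb a) g [::])); last first.
      by move=> d; rewrite delta1_lin act_zb_aug.
    rewrite actD actB actZ (F3 a (fun d => g [:: d])) actZr act_w_aug; rewrite /lin; ring.
  rewrite /lin; ring.
case: p hs => [|p'] // [] hs.
set bs := b :: s''.
set m := mul a b.
set g' := lin (zb a) g.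
set h := lin w g.
have E1 := D1 p' (Hc g) a b s''.
have E2 : bar_delta mul aug p' (fun t => Hc g (a :: t)) bs =
   - bar_delta mul aug p' (fun t => h (a :: t)) bs - bar_delta mul aug p' (Hc g') bs.
  by rewrite -deltaN -deltaB; apply: delta_ext => t.
have E3 := IH p' g' (congr1 S hs).
have E4 : Hc (bar_delta mul aug p'.+2 g) (a :: bs) =
   - lin w (bar_delta mul aug p'.+2 g) (a :: bs) - Hc (lin (zb a) (bar_delta mul aug p'.+2 g)) bs by [].
pose K2 := fun u => act (zb a) (fun e => (mul e (head one u)).1 * g ((mul e (head one u)).2 :: behead u)).
pose K3 := fun u => aug (head one u) * g' (behead u).
have E5 : Hc (bar_delta mul aug p'.+1 g') bs + Hc (lin (zb a) (bar_delta mul aug p'.+2 g)) bs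
        = aug a * Hc g bs - Hc K2 bs + Hc K3 bs.
  rewrite -HcD -HcZ -HcB -HcD; apply: Hc_ext => -[|c t] // _.
  rewrite /g' delta_lin_act act_zb_aug /K2 /K3 /= -/g'; ring.
have E6 : Hc K3 bs = - (aug b * Hc g' s'').
  rewrite /bs /=.
  have -> : lin w K3 (b :: s'') = 0.
    by rewrite /lin /K3 /= actZr act_w_aug mul0r.
  rewrite -HcZ oppr0 sub0r; congr (- _); apply: Hc_fext => t.
  by rewrite /lin /K3 /= actZr act_zb_aug mulrC.
have E7 : Hc K2 bs = - (m.1 * Hc (lin (zb m.2) g) s'').
  rewrite /bs /=.
  have -> : lin w K2 (b :: s'') = 0.
    by rewrite /lin /K2 /= (F3 a (fun d => g (d :: b :: s''))).
  rewrite -HcZ oppr0 sub0r; congr (- _); apply: Hc_fext => t.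
  by rewrite /lin /K2 /= (F4 a b (fun d => g (d :: t))).
have E8 : Hc g (m.2 :: s'') = - h (m.2 :: s'') - Hc (lin (zb m.2) g) s'' by [].
have E9 : Hc g (a :: s'') = - h (a :: s'') - Hc g' s'' by [].
have E11 := D1 p' h a b s''.
have E12 := delta_lin_act p'.+1 w g a bs.
have E13 := F5 a (fun d => g (d :: bs)).
have E14 := act_w_aug.
have -> : Phi g [:: a, b & s''] = Phi g' bs by [].
rewrite E6 E7 in E5.
clear E6 E7.
subst K2 K3 bs m g' h.
have E3' : bar_delta mul aug p' (Hc (lin (zb a) g)) (b :: s'') =
  lin (zb a) g (b :: s'') - Phi (lin (zb a) g) (b :: s'') - Hc (bar_delta mul aug p'.+1 (lin (zb a) g)) (b :: s'').
  by rewrite -E3; ring.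
have E5' : Hc (lin (zb a) (bar_delta mul aug p'.+2 g)) (b :: s'') =
  aug a * Hc g (b :: s'') - - ((mul a b).1 * Hc (lin (zb (mul a b).2) g) s'') + - (aug b * Hc (lin (zb a) g) s'')
  - Hc (bar_delta mul aug p'.+1 (lin (zb a) g)) (b :: s'').
  by rewrite -E5; ring.
have E11' : bar_delta mul aug p' (fun t => lin w g (a :: t)) (b :: s'') =
  aug a * lin w g (b :: s'') - (mul a b).1 * lin w g ((mul a b).2 :: s'') +
  aug b * lin w g (a :: s'') - bar_delta mul aug p'.+1 (lin w g) [:: a, b & s''].
  by rewrite E11; ring.
rewrite E1 E2 E4 E3' E5' E8 E9 E11' E12 E13 E14 /lin; ring.
Qed.
End Gen.
Section RookComb.
Variable n : nat.

Lemma rook_eq (d1 d2 : rook n) : sval d1 = sval d2 -> d1 = d2.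
Proof.
case: d1 d2 => [f1 h1] [f2 h2] /= e; subst f2.
by rewrite (proof_irrelevance _ h1 h2).
Qed.

Definition rdom (d : rook n) : {set 'I_n} := [set i | sval d i != None].
Definition rim (d : rook n) : {set 'I_n} := [set j | [exists i, sval d i == Some j]].
Definition rrank (d : rook n) := #|rdom d|.

Definition rfun (d : rook n) (i : 'I_n) : 'I_n := odflt i (sval d i).

Lemma rfun_inj (d : rook n) : {in rdom d &, injective (rfun d)}.
Proof.
move=> i j; rewrite !inE /rfun.
case E1: (sval d i) => [a|] // _; case E2: (sval d j) => [b|] // _ /= ab; subst b.
exact: (proj2_sig d) E1 E2.
Qed.

Lemma rim_imset (d : rook n) : rim d = rfun d @: rdom d.
Proof.
apply/setP => j; rewrite inE; apply/existsP/imsetP.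
  case=> i /eqP E; exists i; first by rewrite inE E.
  by rewrite /rfun E.
case=> i; rewrite inE /rfun; case E: (sval d i) => [a|] //= _ ->.
by exists i; rewrite E.
Qed.

Lemma card_rim (d : rook n) : #|rim d| = rrank d.
Proof. by rewrite rim_imset card_in_imset //; exact: rfun_inj. Qed.

Lemma beta_rank (d1 d2 : rook n) :
  (rook_beta d1 d2 + rrank d1 + rrank d2 = n + rrank (rook_comp d1 d2))%N.
Proof.
have hb : rook_beta d1 d2 = #|~: (rim d1 :|: rdom d2)|.
  apply: eq_card => j; rewrite [in RHS]inE in_setU negb_or /=.
  congr andb; last by rewrite inE negbK.
  apply/forallP/negP => [h | h i].
    by rewrite inE => /existsP [i /eqP hi]; move: (h i); rewrite hi eqxx.
  by apply/negP => /eqP hi; apply: h; rewrite inE; apply/existsP; exists i; rewrite hi.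
have hi : #|rim d1 :&: rdom d2| = rrank (rook_comp d1 d2).
  have -> : rim d1 :&: rdom d2 = rfun d1 @: rdom (rook_comp d1 d2).
    apply/setP => j; rewrite !inE; apply/andP/imsetP.
      case=> /existsP [i /eqP E] hj; exists i; last by rewrite /rfun E.
      by rewrite inE /rook_comp /rook_comp_fun /= ffunE E.
    case=> i; rewrite inE /rook_comp /rook_comp_fun /= ffunE /rfun.
    case E: (sval d1 i) => [a|] //= h ->; split=> //.
    by apply/existsP; exists i; rewrite E.
  rewrite card_in_imset //; move=> i j hi hj; apply: rfun_inj; move: hi hj;
    rewrite !inE /rook_comp /rook_comp_fun /= !ffunE;
    by [case: (sval d1 i) | case: (sval d1 j)] => //; case: (sval d1 i) => //.
have hc := cardsC (rim d1 :|: rdom d2).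
have hu := cardsUI (rim d1) (rdom d2).
rewrite card_ord in hc.
rewrite hb -card_rim -hi.
rewrite /rrank in hu *; lia.
Qed.


Lemma comp_assoc (d1 d2 d3 : rook n) :
  rook_comp (rook_comp d1 d2) d3 = rook_comp d1 (rook_comp d2 d3).
Proof.
apply: rook_eq; apply/ffunP => i; rewrite /rook_comp /rook_comp_fun /= !ffunE.
by case: (sval d1 i) => //= a; rewrite ffunE.
Qed.

Lemma beta_assoc (d1 d2 d3 : rook n) :
  (rook_beta d1 d2 + rook_beta (rook_comp d1 d2) d3 =
   rook_beta d2 d3 + rook_beta d1 (rook_comp d2 d3))%N.
Proof.
have h1 := beta_rank d1 d2.
have h2 := beta_rank (rook_comp d1 d2) d3.
have h3 := beta_rank d2 d3.
have h4 := beta_rank d1 (rook_comp d2 d3).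
rewrite comp_assoc in h2; lia.
Qed.

Definition idr (S : {set 'I_n}) : rook n.
Proof.
exists [ffun i => if i \in S then Some i else None].
move=> i j x; rewrite !ffunE.
by case: (i \in S) => // -[->]; case: (j \in S) => // -[].
Defined.

Definition rone : rook n := idr [set: 'I_n].

Lemma rone_val i : sval rone i = Some i.
Proof. by rewrite /= ffunE inE. Qed.

Definition isperm (d : rook n) : bool := [forall i, sval d i != None].

Lemma beta_one_l (d : rook n) : rook_beta rone d = 0%N.
Proof.
apply: eq_card0 => j; rewrite !inE /=; apply/negbTE; apply/nandP; left.
by rewrite negb_forall; apply/existsP; exists j; rewrite rone_val negbK.
Qed.

Lemma beta_one_r (d : rook n) : rook_beta d rone = 0%N.
Proof.
by apply: eq_card0 => j; rewrite !inE /= rone_val andbF.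
Qed.

Lemma comp_one_l (d : rook n) : rook_comp rone d = d.
Proof. by apply: rook_eq; apply/ffunP => i; rewrite /= !ffunE inE. Qed.

Lemma comp_one_r (d : rook n) : rook_comp d rone = d.
Proof.
apply: rook_eq; apply/ffunP => i; rewrite /= !ffunE.
by case: (sval d i) => //= a; rewrite ffunE inE.
Qed.

Lemma isperm_rank (d : rook n) : isperm d = (rrank d == n).
Proof.
rewrite /rrank /isperm; apply/forallP/eqP => [h | h i].
  have -> : rdom d = [set: 'I_n] by apply/setP => i; rewrite !inE h.
  by rewrite cardsT card_ord.
have : rdom d = [set: 'I_n] by apply/eqP; rewrite eqEcard subsetT cardsT card_ord h leqnn.
by move/setP/(_ i); rewrite !inE.
Qed.

Lemma nonperm_dom (d : rook n) : ~~ isperm d -> exists i, sval d i = None.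
Proof.
rewrite /isperm negb_forall => /existsP [i]; rewrite negbK => /eqP h; by exists i.
Qed.

Lemma nonperm_im (d : rook n) : ~~ isperm d -> exists j, j \notin rim d.
Proof.
rewrite isperm_rank => h.
have : (#|rim d| < n)%N.
  by rewrite card_rim ltn_neqAle h /= /rrank -[X in (_ <= X)%N](card_ord n) max_card.
move=> hc; case: (pickP (fun j => j \notin rim d)) => [j hj | hall]; first by exists j.
have e : rim d = [set: 'I_n].
  by apply/setP => j; rewrite [RHS]inE; move: (hall j) => /negbT; rewrite negbK.
by move: hc; rewrite e cardsT card_ord ltnn.
Qed.

Lemma perm_im (d : rook n) (j : 'I_n) : isperm d -> j \in rim d.
Proof.
rewrite isperm_rank => /eqP h.
have : rim d = [set: 'I_n].
  by apply/eqP; rewrite eqEcard subsetT cardsT card_ord card_rim h /= leqnn.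
by move=> ->; rewrite in_setT.
Qed.

Lemma isperm_comp (d1 d2 : rook n) : isperm (rook_comp d1 d2) -> isperm d1 && isperm d2.
Proof.
move=> h.
have h1 : isperm d1.
  apply/forallP => i; move/forallP: h => /(_ i); rewrite /= ffunE.
  by case: (sval d1 i).
rewrite h1 /=; apply/forallP => j.
have := perm_im j h1; rewrite inE => /existsP [i /eqP hi].
move/forallP: h => /(_ i); by rewrite /= ffunE hi.
Qed.
End RookComb.

Section RookZ.
Variables (k : comPzRingType) (n : nat) (eps eps' : k).
Hypothesis heps : eps * eps' = 1.

Local Notation mulR := (@rook_mul k n eps).

Definition cz (A : {set 'I_n}) : k := (-1) ^+ (n - #|A|) * eps' ^+ (n - #|A|).
Definition zr : seq (k * rook n) := [seq (cz A, idr A) | A <- index_enum {set 'I_n}].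

Lemma act_zr F : act zr F = \sum_(A : {set 'I_n}) cz A * F (idr A).
Proof. by rewrite /act big_map. Qed.

Lemma sum_pair (G : {set 'I_n} -> k) (j : 'I_n) :
  \sum_(A : {set 'I_n}) G A = \sum_(A : {set 'I_n} | j \notin A) (G A + G (j |: A)).
Proof.
rewrite (bigID (fun A : {set 'I_n} => j \in A)) /= addrC big_split /=; congr (_ + _).
rewrite (reindex_onto (fun A => j |: A) (fun A => A :\ j)) /=; last first.
  by move=> A hS; rewrite setD1K.
apply: eq_bigl => A; rewrite setU11 /=.
apply/eqP/idP => [<-|h]; first by rewrite setD11.
by rewrite setU1K.
Qed.

Lemma idr_val (A : {set 'I_n}) (i : 'I_n) : sval (idr A) i = if i \in A then Some i else None.
Proof. by rewrite /= ffunE. Qed.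

Lemma idr_notin (A : {set 'I_n}) (j : 'I_n) : [forall l, sval (idr A) l != Some j] = (j \notin A).
Proof.
apply/forallP/idP => [h | h l].
  apply/negP => hj; move: (h j); by rewrite idr_val hj eqxx.
rewrite idr_val; case: ifP => // hl; apply/eqP => -[e]; subst l; by rewrite hl in h.
Qed.

Lemma card_U1 (A : {set 'I_n}) j : j \notin A -> (n - #|A| = (n - #|j |: A|).+1)%N.
Proof.
move=> hj; have := cardsU1 j A; rewrite hj /= => hc.
have hm : (#|j |: A| <= n)%N by rewrite -[X in (_ <= X)%N](card_ord n) max_card.
move: hc hm; move: #|j |: A| #|A| => x y; lia.
Qed.

Lemma pair0 (N B : nat) (X : k) :
  (-1) ^+ N.+1 * eps' ^+ N.+1 * (eps ^+ B.+1 * X) + (-1) ^+ N * eps' ^+ N * (eps ^+ B * X) = 0.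
Proof.
have -> : (-1) ^+ N.+1 * eps' ^+ N.+1 * (eps ^+ B.+1 * X) + (-1) ^+ N * eps' ^+ N * (eps ^+ B * X)
  = (-1) ^+ N * eps' ^+ N * eps ^+ B * X * (1 - eps * eps') by rewrite !exprS; ring.
by rewrite heps subrr mulr0.
Qed.

Lemma Lz_left (d : rook n) j F : j \notin rim d ->
  act zr (fun e => (mulR d e).1 * F (mulR d e).2) = 0.
Proof.
move=> hj; rewrite act_zr (sum_pair _ j); apply: big1 => A hS /=.
have hc : rook_comp d (idr (j |: A)) = rook_comp d (idr A).
  apply: rook_eq; apply/ffunP => i; rewrite /= !ffunE.
  case E: (sval d i) => [l|] //=; rewrite !ffunE in_setU1.
  have -> : (l == j) = false.
    apply/negP => /eqP e; subst l; move: hj; rewrite inE => /existsP; apply; by exists i; rewrite E.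
  by [].
have hb : rook_beta d (idr A) = (rook_beta d (idr (j |: A))).+1.
  rewrite /rook_beta (cardD1 j) inE /= idr_val (negbTE hS) eqxx andbT.
  have -> : [forall i, sval d i != Some j].
    apply/forallP => i; apply/negP => /eqP E; move: hj; rewrite inE => /existsP; apply; by exists i; rewrite E.
  rewrite add1n; congr S; apply: eq_card => l; rewrite !inE !idr_val in_setU1.
  by case: (l == j); rewrite ?andbF ?andbT //=; case: (l \in A).
rewrite /cz (card_U1 hS) hc hb; exact: pair0.
Qed.

Lemma Lz_right (d : rook n) i F : sval d i = None ->
  act zr (fun e => (mulR e d).1 * F (mulR e d).2) = 0.
Proof.
move=> hi; rewrite act_zr (sum_pair _ i); apply: big1 => A hS /=.
have hc : rook_comp (idr (i |: A)) d = rook_comp (idr A) d.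
  apply: rook_eq; apply/ffunP => l; rewrite /= !ffunE in_setU1.
  case: (eqVneq l i) => [->|hl] /=; last by [].
  by rewrite (negbTE hS) hi.
have hb : rook_beta (idr A) d = (rook_beta (idr (i |: A)) d).+1.
  rewrite /rook_beta (cardD1 i) inE /= idr_notin hS hi eqxx /= add1n; congr S.
  apply: eq_card => l; rewrite !inE !idr_notin in_setU1 negb_or.
  by case: (l == i).
rewrite /cz (card_U1 hS) hc hb; exact: pair0.
Qed.


Lemma beta_perm_l (d : rook n) A : isperm d -> rook_beta d (idr A) = 0%N.
Proof.
move=> hd; apply: eq_card0 => j; rewrite !inE /=.
have := perm_im j hd; rewrite inE => /existsP [i /eqP hi].
apply/negbTE; apply/nandP; left; rewrite negb_forall; apply/existsP; exists i; by rewrite hi negbK.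
Qed.

Lemma beta_perm_r (d : rook n) A : isperm d -> rook_beta (idr A) d = 0%N.
Proof.
move=> hd; apply: eq_card0 => j; rewrite !inE /=.
by move/forallP: hd => /(_ j) /negbTE ->; rewrite andbF.
Qed.

Lemma Lz_perm (d : rook n) F : isperm d ->
  act zr (fun e => (mulR d e).1 * F (mulR d e).2) =
  act zr (fun e => (mulR e d).1 * F (mulR e d).2).
Proof.
move=> hd; rewrite !act_zr.
have finj : injective (rfun d).
  move=> i j; apply: rfun_inj; rewrite inE; by move/forallP: hd => ->.
rewrite (reindex_inj (imset_inj finj)) /=; apply: eq_bigr => A _.
rewrite /rook_mul /= beta_perm_l // beta_perm_r // /cz card_imset //.
congr (_ * (_ * F _)).
apply: rook_eq; apply/ffunP => i; rewrite /= !ffunE.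
have : sval d i != None by move/forallP: hd.
rewrite /rfun; case E: (sval d i) => [a|] //= _.
rewrite ffunE; have -> : (a \in [set odflt x (sval d x) | x in A]) = (i \in A).
  have -> : a = rfun d i by rewrite /rfun E.
  by rewrite mem_imset.
by case: (i \in A).
Qed.

Lemma zr_left0 (d : rook n) F : ~~ isperm d ->
  act zr (fun e => (mulR d e).1 * F (mulR d e).2) = 0.
Proof. move=> h; have [j hj] := nonperm_im h; exact: (Lz_left _ hj). Qed.

Lemma zr_right0 (d : rook n) F : ~~ isperm d ->
  act zr (fun e => (mulR e d).1 * F (mulR e d).2) = 0.
Proof. move=> h; have [i hi] := nonperm_dom h; exact: (Lz_right _ hi). Qed.

Lemma zr_cent (d : rook n) F : act (emul mulR (sgl k d) zr) F = act (emul mulR zr (sgl k d)) F.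
Proof.
rewrite !act_emul act_sgl.
rewrite (@act_ext _ _ zr (fun e => act (sgl k d) _) (fun e => (mulR e d).1 * F (mulR e d).2)); last first.
  by move=> e; rewrite act_sgl.
case hd: (isperm d); first exact: Lz_perm.
by rewrite zr_left0 ?hd // zr_right0 ?hd.
Qed.

Lemma isperm_idr (A : {set 'I_n}) : isperm (idr A) = (A == setT).
Proof.
apply/forallP/eqP => [h | ->]; last by move=> i; rewrite idr_val inE.
apply/setP => i; move: (h i); rewrite idr_val inE; by case: (i \in A).
Qed.

Lemma zr_idem F : act (emul mulR zr zr) F = act zr F.
Proof.
rewrite act_emul act_zr (bigD1 setT) //=.
rewrite big1 => [|A hA]; last first.
  by rewrite zr_left0 ?mulr0 // isperm_idr.
rewrite addr0 /cz cardsT card_ord subnn !expr0 !mul1r.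
apply: act_ext => e.
have := beta_one_l e; rewrite /rone => ->.
have := comp_one_l e; rewrite /rone => ->.
by rewrite expr0 mul1r.
Qed.

Lemma zr_aug (d : rook n) : act (emul mulR zr (sgl k d)) (@rook_aug k n) = rook_aug k d.
Proof.
rewrite act_emul.
rewrite (@act_ext _ _ zr (fun e => act (sgl k d) _) (fun e => (mulR e d).1 * rook_aug k (mulR e d).2)); last first.
  by move=> e; rewrite act_sgl.
case hd: (isperm d); last by rewrite zr_right0 ?hd // /rook_aug -/(isperm d) hd.
rewrite act_zr (bigD1 setT) //= big1 => [|A hA]; last first.
  rewrite /rook_aug; case: ifP => [h|]; rewrite ?mulr0 //.
  by move: (isperm_comp h); rewrite isperm_idr (negbTE hA).
rewrite addr0 /cz cardsT card_ord subnn !expr0 !mul1r /=.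
have := beta_one_l d; rewrite /rone => ->.
have := comp_one_l d; rewrite /rone => ->.
by rewrite expr0 mul1r.
Qed.


End RookZ.

Section Morph.
Variables (k : comPzRingType) (D1 D2 : Type) (mul1 : D1 -> D1 -> k * D1) (aug1 : D1 -> k)
  (mul2 : D2 -> D2 -> k * D2) (aug2 : D2 -> k) (phi : D1 -> D2).
Hypothesis hmul : forall a b, mul2 (phi a) (phi b) = ((mul1 a b).1, phi (mul1 a b).2).
Hypothesis haug : forall a, aug2 (phi a) = aug1 a.

Lemma delta_morph p g s :
  bar_delta mul1 aug1 p (fun t => g (map phi t)) s = bar_delta mul2 aug2 p g (map phi s).
Proof.
have hm : forall i, bar_merge mul1 (fun t => g (map phi t)) s i = bar_merge mul2 g (map phi s) i.
  move=> i; rewrite /bar_merge -map_drop.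
  case: (drop i s) => [|a [|b r]] //=; by rewrite hmul /= map_cat map_take.
rewrite /bar_delta.
have -> : \sum_(i < p) (-1) ^+ i.+1 * bar_merge mul1 (fun t => g (map phi t)) s i =
  \sum_(i < p) (-1) ^+ i.+1 * bar_merge mul2 g (map phi s) i by apply: eq_bigr => i _; rewrite hm.
case: s {hm} => [|x t] //=.
by rewrite haug map_take last_map haug.
Qed.
End Morph.

Section Final.
Variables (k : comPzRingType) (n : nat) (eps eps' : k).
Hypothesis heps : eps * eps' = 1.

Local Notation mulR := (@rook_mul k n eps).
Local Notation augR := (@rook_aug k n).
Local Notation mulS := (@sym_mul k n).
Local Notation augS := (@sym_aug k n).
Local Notation zR := (@zr k n eps').
Local Notation oneR := (@rone n).

Lemma hR1l (d : rook n) : mulR oneR d = (1, d).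
Proof. by rewrite /rook_mul beta_one_l comp_one_l expr0. Qed.
Lemma hR1r (d : rook n) : mulR d oneR = (1, d).
Proof. by rewrite /rook_mul beta_one_r comp_one_r expr0. Qed.
Lemma hRassoc1 (a b c : rook n) :
  (mulR a b).1 * (mulR (mulR a b).2 c).1 = (mulR b c).1 * (mulR a (mulR b c).2).1.
Proof. by rewrite /rook_mul /= -!exprD beta_assoc. Qed.
Lemma hRassoc2 (a b c : rook n) : (mulR (mulR a b).2 c).2 = (mulR a (mulR b c).2).2.
Proof. exact: comp_assoc. Qed.
Lemma hRaug1 : augR oneR = 1.
Proof.
rewrite /rook_aug; have -> : [forall i, sval oneR i != None] by apply/forallP => i; rewrite rone_val.
done.
Qed.

Definition HcR := Hc mulR oneR zR.
Definition PhiR := Phi mulR zR.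

Lemma homotopyR p s g : size s = p.+1 ->
  bar_delta mulR augR p (HcR g) s + HcR (bar_delta mulR augR p.+1 g) s = g s - PhiR g s.
Proof.
apply: Hc_homotopy.
- exact: hR1l.
- exact: hR1r.
- exact: hRassoc1.
- exact: hRassoc2.
- exact: hRaug1.
- by move=> d F; apply: zr_cent.
- by move=> F; apply: zr_idem.
- by move=> d; apply: zr_aug.
Qed.

Lemma Phi0 (s : seq (rook n)) : PhiR (fun _ => 0) s = 0.
Proof.
rewrite /PhiR; elim: s => [|b s IH] //=.
by rewrite (lin0 (zb mulR zR b)).
Qed.

Lemma Phi_nonperm (s : seq (rook n)) g : ~~ all (@isperm n) s -> PhiR g s = 0.
Proof.
elim: s g => [|b s IH] g //=.
case hb: (isperm b) => /= h.
  exact: IH.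
have -> : lin (zb mulR zR b) g = fun _ => 0.
  apply: functional_extensionality => t; rewrite /lin act_zb.
  exact: (zr_right0 heps (fun d => g (d :: t)) (negbT hb)).
exact: Phi0.
Qed.


Definition emb (sg : {perm 'I_n}) : rook n.
Proof.
exists [ffun i => Some (sg i)].
move=> i j x; rewrite !ffunE => -[hi] [hj]; apply: (@perm_inj _ sg); by rewrite hi hj.
Defined.

Lemma emb_val sg i : sval (emb sg) i = Some (sg i).
Proof. by rewrite /= ffunE. Qed.

Lemma isperm_emb sg : isperm (emb sg).
Proof. by apply/forallP => i; rewrite emb_val. Qed.

Lemma emb_mul (a b : {perm 'I_n}) : mulR (emb a) (emb b) = ((mulS a b).1, emb (mulS a b).2).
Proof.
rewrite /rook_mul /sym_mul /=; congr pair.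
  rewrite /rook_beta.
  have -> : #|[pred j | [forall i, sval (emb a) i != Some j] && (sval (emb b) j == None)]| = 0%N.
    by apply: eq_card0 => j; rewrite !inE emb_val andbF.
  by rewrite expr0.
by apply: rook_eq; apply/ffunP => i; rewrite /= !ffunE /= emb_val permM.
Qed.

Lemma emb_aug sg : augR (emb sg) = augS sg.
Proof. by rewrite /rook_aug -/(isperm (emb sg)) isperm_emb. Qed.

Definition toperm (d : rook n) : {perm 'I_n} :=
  odflt 1%g [pick sg : {perm 'I_n} | sval (emb sg) == sval d].

Lemma emb_toperm (d : rook n) : isperm d -> emb (toperm d) = d.
Proof.
move=> hd; rewrite /toperm; case: pickP => [sg /eqP h | hnone] /=; first exact: rook_eq.
have finj : injective (rfun d).
  move=> x y; apply: rfun_inj; rewrite inE; by move/forallP: hd => ->.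
suff: sval (emb (perm finj)) == sval d by rewrite hnone.
apply/eqP/ffunP => i.
rewrite emb_val permE /rfun; move/forallP: hd => /(_ i); by case: (sval d i).
Qed.

Lemma toperm_emb sg : toperm (emb sg) = sg.
Proof.
rewrite /toperm; case: pickP => [s /eqP h | hnone] /=; last by move: (hnone sg); rewrite eqxx.
apply/permP => i; move/ffunP: h => /(_ i); rewrite !ffunE; by case.
Qed.

Definition iotaS (g : seq (rook n) -> k) : seq {perm 'I_n} -> k := fun t => g (map emb t).
Definition piS (f : seq {perm 'I_n} -> k) : seq (rook n) -> k :=
  fun t => if all (@isperm n) t then f (map toperm t) else 0.

Lemma iota_chain p g s :
  bar_delta mulS augS p (iotaS g) s = bar_delta mulR augR p g (map emb s).
Proof. apply: delta_morph; [exact: emb_mul | exact: emb_aug]. Qed.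

Lemma map_emb_toperm (s : seq (rook n)) : all (@isperm n) s -> map emb (map toperm s) = s.
Proof. by elim: s => [|x s IH] //= /andP [hx hs]; rewrite emb_toperm // IH. Qed.

Lemma map_toperm_emb (s : seq {perm 'I_n}) : map toperm (map emb s) = s.
Proof. by elim: s => [|x s IH] //=; rewrite toperm_emb IH. Qed.

Lemma all_isperm_emb (s : seq {perm 'I_n}) : all (@isperm n) (map emb s).
Proof. by elim: s => [|x s IH] //=; rewrite isperm_emb. Qed.

Lemma pi_chain p f s : size s = p.+1 ->
  bar_delta mulR augR p (piS f) s = piS (bar_delta mulS augS p f) s.
Proof.
move=> hs; rewrite /piS; case ha: (all (@isperm n) s).
  rewrite -{1}(map_emb_toperm ha) -iota_chain; apply: delta_ext => t.
  by rewrite /iotaS all_isperm_emb map_toperm_emb.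
rewrite /bar_delta big1 => [|i _]; last first.
  rewrite /bar_merge; case E: (drop i s) => [|a [|b r]]; rewrite ?mulr0 //.
  case hh: (all (@isperm n) _); rewrite ?mulr0 //.
  move: hh; rewrite all_cat /= => /and3P [h1 h2 h3].
  have /andP [h4 h5] := isperm_comp h2.
  by move: ha; rewrite -(cat_take_drop i s) E all_cat /= h1 h4 h5 h3.
case: s hs ha => [|x t] //= [hs] ha.
have e1 : augR x * (if all (@isperm n) t then f (map toperm t) else 0) = 0.
  rewrite /rook_aug -/(isperm x); case hx: (isperm x); last by rewrite mul0r.
  by move: ha; rewrite /= hx /= => ->; rewrite mulr0.
have e2 : (-1) ^+ p.+1 * (if all (@isperm n) (take p (x :: t)) then f (map toperm (take p (x :: t))) else 0) * augR (last x t) = 0.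
  rewrite /rook_aug -/(isperm (last x t)).
  case h1: (all _ (take p (x :: t))); rewrite ?mulr0 ?mul0r //.
  case h2: (isperm (last x t)); rewrite ?mulr0 //.
  have hall : all (@isperm n) (x :: t).
    have -> : x :: t = take p (x :: t) ++ [:: last x t].
      by rewrite lastI -cats1 -hs -(size_belast x t) take_size_cat.
    by rewrite all_cat h1 /= h2.
  by move: ha; rewrite /= -[isperm x && _]/(all (@isperm n) (x :: t)) hall.
by rewrite e1 e2; ring.
Qed.

Lemma cob_zero q : is_coboundary mulR augR q (fun _ => 0).
Proof. case: q => [//|p]; exists (fun _ => 0) => s _; exact: delta0. Qed.

Lemma cob_zeroS q : is_coboundary mulS augS q (fun _ => 0).
Proof. case: q => [//|p]; exists (fun _ => 0) => s _; exact: delta0. Qed.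

Lemma iso_q q : bar_H_iso mulR augR mulS augS q.
Proof.
exists iotaS, piS; split.
- split.
  + move=> g hg s hs; rewrite iota_chain; apply: hg; by rewrite size_map.
  + case: q => [|p] g; first by move=> h s hs; rewrite /iotaS h // size_map.
    move=> [y hy]; exists (iotaS y) => s hs; by rewrite iota_chain hy // size_map.
  + move=> c g g' _ _.
    have -> : (fun s => iotaS (fun t => c * g t + g' t) s - (c * iotaS g s + iotaS g' s)) = fun _ => 0.
      by apply: functional_extensionality => s; rewrite /iotaS subrr.
    exact: cob_zeroS.
- split.
  + move=> f hf s hs; rewrite pi_chain // /piS; case: ifP => // _.
    by apply: hf; rewrite size_map.
  + case: q => [|p] f; first by move=> h s hs; rewrite /piS; case: ifP => // _; rewrite h // size_map.
    move=> [y hy]; exists (piS y) => s hs; rewrite pi_chain // /piS; case: ifP => // _.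
    by rewrite hy // size_map.
  + move=> c g g' _ _.
    have -> : (fun s => piS (fun t => c * g t + g' t) s - (c * piS g s + piS g' s)) = fun _ => 0.
      apply: functional_extensionality => s; rewrite /piS; case: ifP => _; ring.
    exact: cob_zero.
- move=> g hg; case: q hg => [|p] hg.
    by case=> // _; rewrite /piS /iotaS /= subrr.
  exists (fun s => piS (iotaS (HcR g)) s - HcR g s) => s hs.
  have E : bar_delta mulR augR p (HcR g) s = g s - PhiR g s.
    have := homotopyR g hs.
    have -> : HcR (bar_delta mulR augR p.+1 g) s = 0.
      rewrite /HcR -(Hc0 mulR oneR zR s); apply: Hc_ext => v hv; apply: hg; by rewrite hv hs.
    by rewrite addr0.
  rewrite deltaB pi_chain // /piS /iotaS.
  case ha: (all (@isperm n) s).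
    by rewrite iota_chain map_emb_toperm // E !subrr.
  by rewrite E Phi_nonperm ?ha //; ring.
- move=> f hf.
  have -> : (fun s => iotaS (piS f) s - f s) = fun _ => 0.
    by apply: functional_extensionality => s; rewrite /iotaS /piS all_isperm_emb map_toperm_emb subrr.
  exact: cob_zeroS.
Qed.
End Final.

Theorem theorem7p10 (k : comPzRingType) (n : nat) (eps : k) :
  (0 < n)%N -> (exists eps' : k, eps * eps' = 1) ->
  graded_H_iso (@rook_mul k n eps) (@rook_aug k n)
               (@sym_mul k n) (@sym_aug k n).
Proof.
move=> _ [eps' he] q; exact: (iso_q n he q).
Qed.
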